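(* Let $(A,\cdot,[\,,\,],\varepsilon)$ be an $F$-manifold color algebra, let $V$ be a $G$-graded vector space, let $\rho:A\to\mathfrak{gl}(V)$ be a representation of the Lie color algebra $(A,[\,,\,],\varepsilon)$ and let $\mu:A\to\mathfrak{gl}(V)$ be a representation of the $\varepsilon$-commutative associative algebra $(A,\cdot,\varepsilon)$ such that for all homogeneous $x,y,z\in A$: $$R_{\rho,\mu}(x\cdot y,z)=\varepsilon(x,y+z)R_{\rho,\mu}(y,z)\mu(x)+\varepsilon(y,z)R_{\rho,\mu}(x,z)\mu(y),$$ $$\mu(P_x(y,z))=-\varepsilon(x,y+z)T_{\rho,\mu}(y,z)\mu(x)+\mu(x)T_{\rho,\mu}(y,z),$$ where $R_{\rho,\mu}(x,y)=\rho(x)\mu(y)-\varepsilon(x,y)\mu(y)\rho(x)-\mu([x,y])$ and $T_{\rho,\mu}(x,y)=-\varepsilon(x,y)\rho(y)\mu(x)-\rho(x)\mu(y)+\rho(x\cdot y)$. Then $(V^*,\rho^*,-\mu^* )$ is a representation of the $F$-manifold color algebra $A$.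
   Context: $G$ is an abelian group and $\varepsilon:G\times G\to\mathbb K\setminus\{0\}$ is a skew-symmetric bicharacter: $\varepsilon(a,b)\varepsilon(b,a)=1$, $\varepsilon(a,b+c)=\varepsilon(a,b)\varepsilon(a,c)$, $\varepsilon(a+b,c)=\varepsilon(a,c)\varepsilon(b,c)$; $\mathbb K$ is algebraically closed of characteristic zero, spaces finite-dimensional. For homogeneous $x\in A_a,y\in A_b$, $\varepsilon(x,y)$ means $\varepsilon(a,b)$, $\varepsilon(x,y+z)$ means $\varepsilon(a,b+c)$, etc. An $\varepsilon$-commutative associative algebra is a $G$-graded associative algebra $(A,\cdot)$ with $A_aA_b\subseteq A_{a+b}$ and $x\cdot y=\varepsilon(x,y)y\cdot x$. A Lie color algebra is a $G$-graded space with bilinear $[\,,\,]$, $[A_a,A_b]\subseteq A_{a+b}$, $[x,y]=-\varepsilon(x,y)[y,x]$, and $\varepsilon(z,x)[x,[y,z]]+\varepsilon(y,z)[z,[x,y]]+\varepsilon(x,y)[y,[z,x]]=0$. An $F$-manifold color algebra is $(A,\cdot,[\,,\,],\varepsilon)$ with $(A,\cdot,\varepsilon)$ an $\varepsilon$-commutative associative algebra and $(A,[\,,\,],\varepsilon)$ a Lie color algebra such that $P_{x\cdot y}(z,w)=x\cdot P_y(z,w)+\varepsilon(x,y)y\cdot P_x(z,w)$ for homogeneous $x,y,z,w$, where $P_x(y,z)=[x,y\cdot z]-[x,y]\cdot z-\varepsilon(x,y)y\cdot[x,z]$. Representations: $\mu:A\to\mathfrak{gl}(V)$ with $\mu(x)V_a\subseteq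 V_{a+b}$ for $x\in A_b$ and $\mu(x\cdot y)=\mu(x)\mu(y)$ (for the associative algebra); $\rho:A\to\mathfrak{gl}(V)$ with the same degree condition and $\rho([x,y])=\rho(x)\rho(y)-\varepsilon(x,y)\rho(y)\rho(x)$ (for the Lie color algebra). A representation of the $F$-manifold color algebra $A$ is a triple $(W,\rho',\mu')$ with $\rho'$ a Lie color representation and $\mu'$ an associative representation on the graded space $W$ such that for homogeneous $x_1,x_2,x_3$: $R_{\rho',\mu'}(x_1\cdot x_2,x_3)=\mu'(x_1)R_{\rho',\mu'}(x_2,x_3)+\varepsilon(x_1,x_2)\mu'(x_2)R_{\rho',\mu'}(x_1,x_3)$ and $\mu'(P_{x_1}(x_2,x_3))=\varepsilon(x_1,x_2+x_3)S_{\rho',\mu'}(x_2,x_3)\mu'(x_1)-\mu'(x_1)S_{\rho',\mu'}(x_2,x_3)$, with $R_{\rho',\mu'}(x_1,x_2)=\rho'(x_1)\mu'(x_2)-\varepsilon(x_1,x_2)\mu'(x_2)\rho'(x_1)-\mu'([x_1,x_2])$ and $S_{\rho',\mu'}(x_1,x_2)=\mu'(x_1)\rho'(x_2)+\varepsilon(x_1,x_2)\mu'(x_2)\rho'(x_1)-\rho'(x_1\cdot x_2)$. The dual $V^*$ is $G$-graded by $V^*_a=\{\alpha\in V^*:\alpha(V_b)=0\text{ for all }b\neq -a\}$. For a linear map $\phi:A\to\mathfrak{gl}(V)$ (with $\phi(x)V_b\subseteq V_{a+b}$ for $x\in A_a$), $\phi^*:A\to\mathfrak{gl}(V^* )$ is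 defined by $\phi^*(x)\alpha\in V^*_{a+c}$ and $\langle\phi^*(x)\alpha,v\rangle=-\varepsilon(x,\alpha)\langle\alpha,\phi(x)v\rangle$ for $x\in A_a$, $v\in V_b$, $\alpha\in V^*_c$; this defines $\rho^*$ and $\mu^*$. *)

(* Defs.v *)
From HB Require Import structures.
From mathcomp Require Import all_boot all_order all_algebra.
Set Implicit Arguments. Unset Strict Implicit. Unset Printing Implicit Defensive.
Import GRing.Theory.
Local Open Scope ring_scope.

Section Defs.
Variables (K : fieldType) (G : zmodType) (eps : G -> G -> K).

Definition skew_bichar : Prop :=
  [/\ forall a b, eps a b != 0,
      forall a b, eps a b * eps b a = 1,
      forall a b c, eps a (b + c) = eps a b * eps a c &
      forall a b c, eps (a + b) c = eps a c * eps b c].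

(* A finite-dimensional G-graded space: V = (+)_{a in G} V_a (direct sum,
   finitely many nonzero pieces, since V is finite-dimensional). *)
Definition graded_space (V : vectType K) (Vg : G -> {vspace V}) : Prop :=
  exists s : seq G,
  [/\ uniq s,
      forall a, a \notin s -> Vg a = 0%VS,
      (\sum_(a <- s) Vg a)%VS = fullv &
      forall w : G -> V, (forall a, w a \in Vg a) ->
        \sum_(a <- s) w a = 0 -> forall a, a \in s -> w a = 0].

Variables (A : vectType K) (Ag : G -> {vspace A}).

Definition bilinear_op (op : A -> A -> A) : Prop :=
  (forall k x y z, op (k *: x + y) z = k *: op x z + op y z) /\
  (forall k x y z, op x (k *: y + z) = k *: op x y + op x z).

Definition eps_comm_assoc (mul : A -> A -> A) : Prop :=
  [/\ bilinear_op mul,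
      forall x y z, mul (mul x y) z = mul x (mul y z),
      forall a b x y, x \in Ag a -> y \in Ag b -> mul x y \in Ag (a + b) &
      forall a b x y, x \in Ag a -> y \in Ag b -> mul x y = eps a b *: mul y x].

Definition lie_color (br : A -> A -> A) : Prop :=
  [/\ bilinear_op br,
      forall a b x y, x \in Ag a -> y \in Ag b -> br x y \in Ag (a + b),
      forall a b x y, x \in Ag a -> y \in Ag b -> br x y = - (eps a b *: br y x) &
      forall a b c x y z, x \in Ag a -> y \in Ag b -> z \in Ag c ->
        eps c a *: br x (br y z) + eps b c *: br z (br x y)
        + eps a b *: br y (br z x) = 0].

Variables (mul br : A -> A -> A).

(* P_x(y,z) for x in A_a, y in A_b *)
Definition Pop (a b : G) (x y z : A) : A :=
  br x (mul y z) - mul (br x y) z - eps a b *: mul y (br x z).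

Definition F_manifold_color : Prop :=
  [/\ eps_comm_assoc mul, lie_color br &
      forall a b c d x y z w, x \in Ag a -> y \in Ag b -> z \in Ag c -> w \in Ag d ->
        Pop (a + b) c (mul x y) z w =
        mul x (Pop b c y z w) + eps a b *: mul y (Pop a c x z w)].

Variables (W : vectType K) (Wg : G -> W -> Prop).

Definition lin_map (phi : A -> 'End(W)) : Prop :=
  forall k x y, phi (k *: x + y) = k *: phi x + phi y.

Definition deg_map (phi : A -> 'End(W)) : Prop :=
  forall a b x w, x \in Ag b -> Wg a w -> Wg (a + b) (phi x w).

Definition assoc_rep (mu : A -> 'End(W)) : Prop :=
  [/\ lin_map mu, deg_map mu &
      forall x y w, mu (mul x y) w = mu x (mu y w)].

Definition lie_rep (rho : A -> 'End(W)) : Prop :=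
  [/\ lin_map rho, deg_map rho &
      forall a b x y w, x \in Ag a -> y \in Ag b ->
        rho (br x y) w = rho x (rho y w) - eps a b *: rho y (rho x w)].

(* R_{rho,mu}(x1,x2), x1 in A_a1, x2 in A_a2, applied to w *)
Definition Rop (rho mu : A -> 'End(W)) (a1 a2 : G) (x1 x2 : A) (w : W) : W :=
  rho x1 (mu x2 w) - eps a1 a2 *: mu x2 (rho x1 w) - mu (br x1 x2) w.

Definition Sop (rho mu : A -> 'End(W)) (a1 a2 : G) (x1 x2 : A) (w : W) : W :=
  mu x1 (rho x2 w) + eps a1 a2 *: mu x2 (rho x1 w) - rho (mul x1 x2) w.

Definition Top (rho mu : A -> 'End(W)) (a1 a2 : G) (x1 x2 : A) (w : W) : W :=
  - (eps a1 a2 *: rho x2 (mu x1 w)) - rho x1 (mu x2 w) + rho (mul x1 x2) w.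

Definition F_manifold_rep (rho mu : A -> 'End(W)) : Prop :=
  [/\ lie_rep rho, assoc_rep mu,
      forall a1 a2 a3 x1 x2 x3 w, x1 \in Ag a1 -> x2 \in Ag a2 -> x3 \in Ag a3 ->
        Rop rho mu (a1 + a2) a3 (mul x1 x2) x3 w =
        mu x1 (Rop rho mu a2 a3 x2 x3 w) + eps a1 a2 *: mu x2 (Rop rho mu a1 a3 x1 x3 w) &
      forall a1 a2 a3 x1 x2 x3 w, x1 \in Ag a1 -> x2 \in Ag a2 -> x3 \in Ag a3 ->
        mu (Pop a1 a2 x1 x2 x3) w =
        eps a1 (a2 + a3) *: Sop rho mu a2 a3 x2 x3 (mu x1 w)
        - mu x1 (Sop rho mu a2 a3 x2 x3 w)].

End Defs.

Definition dualsp (K : fieldType) (V : vectType K) := 'Hom(V, K^o).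

Definition dual_hom (K : fieldType) (G : zmodType) (V : vectType K)
    (Vg : G -> {vspace V}) (a : G) (alpha : dualsp V) : Prop :=
  forall b v, b != - a -> v \in Vg b -> alpha v = 0.

Definition is_dual_map (K : fieldType) (G : zmodType) (eps : G -> G -> K)
    (A : vectType K) (Ag : G -> {vspace A}) (V : vectType K) (Vg : G -> {vspace V})
    (phi : A -> 'End(V)) (phi' : A -> 'End(dualsp V)) : Prop :=
  lin_map phi' /\
  forall a c x alpha, x \in Ag a -> dual_hom Vg c alpha ->
    dual_hom Vg (a + c) (phi' x alpha) /\
    forall b v, v \in Vg b ->
      (phi' x alpha) v = - (eps a c * (alpha (phi x v) : K)).

(* Main.v *)
Require Import Defs.
From HB Require Import structures.
From mathcomp Require Import all_boot all_order all_algebra.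
From mathcomp Require Import ring.
Import GRing.Theory.
Local Open Scope ring_scope.

Section Aux.
Variables (K : fieldType) (G : zmodType) (V : vectType K) (Vg : G -> {vspace V}).
Hypothesis HV : graded_space Vg.

Lemma graded_proj : exists pi : G -> 'End(V),
  [/\ forall a v, pi a v \in Vg a,
      forall a b v, v \in Vg b -> pi a v = (if a == b then v else 0) &
      exists s : seq G, forall v, \sum_(a <- s) pi a v = v].
Proof.
case: HV => s [us Hout Hsum Hind].
pose pi := sumv_pi_for (esym Hsum).
have Hm : forall a v, pi a v \in Vg a by move=> a v; exact: memv_sum_pi.
have Hs : forall v, \sum_(a <- s) pi a v = v.
  by move=> v; apply: sumv_pi_uniq_sum; [exact: filter_uniq | exact: memvf].
exists pi; split => //; last by exists s.
move=> a b v Hv.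
case: (boolP (b \in s)) => bs; last first.
  have v0 : v = 0 by move: Hv; rewrite Hout // memv0 => /eqP.
  by rewrite v0 linear0; case: eqP.
case: (boolP (a \in s)) => ais; last first.
  have := Hm a v; rewrite Hout // memv0 => /eqP ->.
  by case: eqP => // eab; move: ais; rewrite eab bs.
pose w c := pi c v - (if c == b then v else 0).
have Hw : forall c, w c \in Vg c.
  move=> c; rewrite /w; apply: memvB; first exact: Hm.
  by case: eqP => [->|_]; [done | exact: mem0v].
have Hw0 : \sum_(c <- s) w c = 0.
  rewrite /w sumrB Hs (big_rem b) //= eqxx big_seq big1 ?addr0 ?subrr // => c.
  by rewrite mem_rem_uniq // inE => /andP[/negbTE -> _].
by have := Hind w Hw Hw0 a ais; rewrite /w => /eqP; rewrite subr_eq0 => /eqP.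
Qed.

Lemma ext_hom (f g : dualsp V) : (forall b v, v \in Vg b -> f v = g v) -> f = g.
Proof.
move=> H; have [pi [Hm _ [s Hs]]] := graded_proj.
apply/lfunP => v; rewrite -(Hs v) !linear_sum; apply: eq_bigr => a _.
exact: H (Hm a v).
Qed.

Lemma ext_dual (f g : 'End(dualsp V)) :
  (forall c alpha, dual_hom Vg c alpha -> f alpha = g alpha) -> f = g.
Proof.
move=> H; have [pi [Hm Hp [s Hs]]] := graded_proj.
apply/lfunP => w.
have Ew : w = \sum_(a <- s) (w \o pi a)%VF.
  apply/lfunP => v; rewrite sum_lfunE -{1}(Hs v) linear_sum.
  by apply: eq_bigr => a _; rewrite comp_lfunE.
rewrite Ew !linear_sum; apply: eq_bigr => a _; apply: (H (-a)).
move=> b v nb Hv; rewrite comp_lfunE (Hp a b v Hv).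
by rewrite opprK in nb; rewrite eq_sym (negbTE nb) linear0.
Qed.

Lemma dual_hom_lin c (f g : dualsp V) k :
  dual_hom Vg c f -> dual_hom Vg c g -> dual_hom Vg c (k *: f + g).
Proof.
by move=> Hf Hg b v nb Hv; rewrite add_lfunE scale_lfunE (Hf b v nb Hv) (Hg b v nb Hv) scaler0 addr0.
Qed.

Lemma dual_homN c (f : dualsp V) : dual_hom Vg c f -> dual_hom Vg c (- f).
Proof. by move=> Hf b v nb Hv; rewrite opp_lfunE (Hf b v nb Hv) oppr0. Qed.

Lemma dual_homZ c (f : dualsp V) k : dual_hom Vg c f -> dual_hom Vg c (k *: f).
Proof. by move=> Hf b v nb Hv; rewrite scale_lfunE (Hf b v nb Hv) scaler0. Qed.

Lemma dual_homD c (f g : dualsp V) :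
  dual_hom Vg c f -> dual_hom Vg c g -> dual_hom Vg c (f + g).
Proof. by move=> Hf Hg; rewrite -[f]scale1r; apply: dual_hom_lin. Qed.

Lemma dual_homB c (f g : dualsp V) :
  dual_hom Vg c f -> dual_hom Vg c g -> dual_hom Vg c (f - g).
Proof. by move=> Hf Hg; apply: dual_homD => //; apply: dual_homN. Qed.

Lemma dual_hom_eq c c' (f : dualsp V) : c = c' -> dual_hom Vg c f -> dual_hom Vg c' f.
Proof. by move->. Qed.


Definition good (L : dualsp V -> dualsp V) := exists F : 'End(dualsp V), L =1 F.

Lemma good_id : good (fun w => w).
Proof. by exists \1%VF => w; rewrite id_lfunE. Qed.
Lemma good_comp (F : 'End(dualsp V)) L : good L -> good (fun w => F (L w)).
Proof. by case=> F' H; exists (F \o F')%VF => w; rewrite comp_lfunE H. Qed.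
Lemma good_add L R : good L -> good R -> good (fun w => L w + R w).
Proof. by case=> F H [F' H']; exists (F + F') => w; rewrite add_lfunE H H'. Qed.
Lemma good_opp L : good L -> good (fun w => - L w).
Proof. by case=> F H; exists (- F) => w; rewrite opp_lfunE H. Qed.
Lemma good_scale k L : good L -> good (fun w => k *: L w).
Proof. by case=> F H; exists (k *: F) => w; rewrite scale_lfunE H. Qed.

Lemma ext_good (L R : dualsp V -> dualsp V) : good L -> good R ->
  (forall c al, dual_hom Vg c al -> L al = R al) -> forall w, L w = R w.
Proof.
move=> [F HF] [F' HF'] H w.
have E : F = F'.
  apply: ext_dual => c al Hal. rewrite -HF -HF'. exact: (H c al Hal).
by rewrite HF HF' E.
Qed.

Lemma hom_reduce (P : V -> Prop) : P 0 -> (forall x y, P x -> P y -> P (x + y)) ->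
  (forall a x, x \in Vg a -> P x) -> forall x, P x.
Proof.
move=> P0 PD Ph x; have [pi [Hm _ [s Hs]]] := graded_proj.
rewrite -(Hs x); elim: s {Hs} => [|a s IH]; first by rewrite big_nil.
by rewrite big_cons; apply: PD => //; exact: Ph (Hm a x).
Qed.

End Aux.
Arguments ext_good {K G V Vg} HV {L R}.
Arguments ext_hom {K G V Vg} HV {f g}.
Arguments ext_dual {K G V Vg} HV {f g}.
Arguments hom_reduce {K G V Vg} HV {P}.
Arguments good_id {K V}.
Arguments good_comp {K V} F {L}.
Arguments good_add {K V L R}.
Arguments good_opp {K V L}.
Arguments good_scale {K V} k {L}.

Ltac goodtac := repeat first [apply: good_add | apply: good_opp | apply: good_scale
  | apply: good_id | apply: good_comp].

Section Lin.
Variables (K : fieldType) (A W : vectType K).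
Lemma lin0 (phi : A -> 'End(W)) : lin_map phi -> phi 0 = 0.
Proof. move=> H; have := H 1 0 0; rewrite !scale1r addr0 => E.
by apply: (addrI (phi 0)); rewrite addr0 -E. Qed.
Lemma linD (phi : A -> 'End(W)) x y : lin_map phi -> phi (x + y) = phi x + phi y.
Proof. by move=> H; have := H 1 x y; rewrite !scale1r. Qed.
Lemma linZ (phi : A -> 'End(W)) k x : lin_map phi -> phi (k *: x) = k *: phi x.
Proof. by move=> H; have := H k x 0; rewrite !addr0 lin0 // addr0. Qed.
Lemma bil0l (op : A -> A -> A) z : bilinear_op op -> op 0 z = 0.
Proof. case=> H _; have := H 1 0 0 z; rewrite !scale1r addr0 => E.
by apply: (addrI (op 0 z)); rewrite addr0 -E. Qed.
Lemma bil0r (op : A -> A -> A) z : bilinear_op op -> op z 0 = 0.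
Proof. case=> _ H; have := H 1 z 0 0; rewrite !scale1r addr0 => E.
by apply: (addrI (op z 0)); rewrite addr0 -E. Qed.
Lemma bilDl (op : A -> A -> A) x y z : bilinear_op op -> op (x + y) z = op x z + op y z.
Proof. by case=> H _; have := H 1 x y z; rewrite !scale1r. Qed.
Lemma bilDr (op : A -> A -> A) x y z : bilinear_op op -> op z (x + y) = op z x + op z y.
Proof. by case=> _ H; have := H 1 z x y; rewrite !scale1r. Qed.
End Lin.


Lemma scaleKo (K : fieldType) (k : K) (t : K^o) : k *: t = k * t.
Proof. by []. Qed.
Arguments lin0 {K A W phi}.
Arguments linD {K A W phi x y}.
Arguments linZ {K A W phi k x}.
Arguments bil0l {K A op z}.
Arguments bil0r {K A op z}.
Arguments bilDl {K A op x y z}.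
Arguments bilDr {K A op x y z}.

Section Main.
Variables (K : fieldType) (G : zmodType) (eps : G -> G -> K).
Hypothesis Heps : skew_bichar eps.
Variables (A : vectType K) (Ag : G -> {vspace A}) (mul br : A -> A -> A).
Hypothesis HF : F_manifold_color eps Ag mul br.
Variables (V : vectType K) (Vg : G -> {vspace V}).
Hypothesis HV : graded_space Vg.
Variables (rho mu : A -> 'End(V)).
Hypothesis Hrho : lie_rep eps Ag br (fun a (v : V) => v \in Vg a) rho.
Hypothesis Hmu : assoc_rep Ag mul (fun a (v : V) => v \in Vg a) mu.
Variables (rho' mu' : A -> 'End(dualsp V)).
Hypothesis Hrho' : is_dual_map eps Ag Vg rho rho'.
Hypothesis Hmu' : is_dual_map eps Ag Vg mu mu'.

Lemma epsDl a b c : eps (a + b) c = eps a c * eps b c. Proof. by case: Heps. Qed.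
Lemma epsDr a b c : eps a (b + c) = eps a b * eps a c. Proof. by case: Heps. Qed.
Lemma epsnz a b : eps a b != 0. Proof. by case: Heps. Qed.
Lemma epsV a b : eps b a = (eps a b)^-1.
Proof.
case: Heps => nz m _ _; apply: (mulfI (nz a b)); by rewrite m divff.
Qed.

Lemma mulg a b x y : x \in Ag a -> y \in Ag b -> mul x y \in Ag (a + b).
Proof. by case: HF => [[_ _ H _] _ _]; apply: H. Qed.
Lemma brg a b x y : x \in Ag a -> y \in Ag b -> br x y \in Ag (a + b).
Proof. by case: HF => _ [_ H _ _] _; apply: H. Qed.
Lemma rhog a d x v : x \in Ag a -> v \in Vg d -> rho x v \in Vg (d + a).
Proof. by case: Hrho => _ H _ Hx Hv; apply: H. Qed.
Lemma mug a d x v : x \in Ag a -> v \in Vg d -> mu x v \in Vg (d + a).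
Proof. by case: Hmu => _ H _ Hx Hv; apply: H. Qed.

Lemma evd phi phi' (H : is_dual_map eps Ag Vg phi phi') a c b x al v :
  x \in Ag a -> dual_hom Vg c al -> v \in Vg b ->
  phi' x al v = - (eps a c * al (phi x v)).
Proof. by move=> Hx Hal Hv; have [_ /(_ b v Hv)] := (H.2 a c x al Hx Hal). Qed.

Lemma degd phi phi' (H : is_dual_map eps Ag Vg phi phi') a c x al :
  x \in Ag a -> dual_hom Vg c al -> dual_hom Vg (a + c) (phi' x al).
Proof. by move=> Hx Hal; have [] := (H.2 a c x al Hx Hal). Qed.

Arguments evd {phi phi'} H {a c b x al v}.
Arguments degd {phi phi'} H {a c x al}.
Arguments mulg {a b x y}. Arguments brg {a b x y}.
Arguments rhog {a d x v}. Arguments mug {a d x v}.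

Lemma dual_R a b c d x y al v : x \in Ag a -> y \in Ag b -> dual_hom Vg c al -> v \in Vg d ->
  Rop eps br rho' (fun x => - mu' x) a b x y al v = eps (a + b) c * al (Rop eps br rho mu a b x y v).
Proof.
move=> Hx Hy Hal Hv.
rewrite /Rop; do ?rewrite !lfunE /=.
rewrite !linearN /= ?lfunE /=.
rewrite (evd Hrho' Hx (degd Hmu' Hy Hal) Hv) (evd Hmu' Hy (degd Hrho' Hx Hal) Hv).
rewrite (evd Hmu' (brg Hx Hy) Hal Hv) (evd Hmu' Hy Hal (rhog Hx Hv)) (evd Hrho' Hx Hal (mug Hy Hv)).
rewrite !linearB !linearZ /= !scaleKo !epsDl !epsDr (epsV a b).
by field; rewrite epsnz.
Qed.

Lemma dual_Rg a b c x y al : x \in Ag a -> y \in Ag b -> dual_hom Vg c al ->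
  dual_hom Vg (a + b + c) (Rop eps br rho' (fun x => - mu' x) a b x y al).
Proof.
move=> Hx Hy Hal; rewrite /Rop /= !opp_lfunE linearN.
apply: dual_homB; first apply: dual_homB.
- apply: dual_homN; apply: dual_hom_eq (degd Hrho' Hx (degd Hmu' Hy Hal)).
  by rewrite addrA.
- apply: dual_homZ; apply: dual_homN.
  apply: dual_hom_eq (degd Hmu' Hy (degd Hrho' Hx Hal)).
  by rewrite addrCA addrA.
- apply: dual_homN; exact: (degd Hmu' (brg Hx Hy) Hal).
Qed.

Lemma dual_S a b c d x y al v : x \in Ag a -> y \in Ag b -> dual_hom Vg c al -> v \in Vg d ->
  Sop eps mul rho' (fun x => - mu' x) a b x y al v = eps (a + b) c * al (Top eps mul rho mu a b x y v).
Proof.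
move=> Hx Hy Hal Hv.
rewrite /Sop /Top; do ?rewrite !lfunE /=.
rewrite (evd Hmu' Hx (degd Hrho' Hy Hal) Hv) (evd Hmu' Hy (degd Hrho' Hx Hal) Hv).
rewrite (evd Hrho' (mulg Hx Hy) Hal Hv) (evd Hrho' Hy Hal (mug Hx Hv)) (evd Hrho' Hx Hal (mug Hy Hv)).
rewrite ?linearB ?linearD ?linearN ?linearZ /= ?scaleKo !epsDl !epsDr (epsV a b).
by field; rewrite epsnz.
Qed.

Lemma dual_Sg a b c x y al : x \in Ag a -> y \in Ag b -> dual_hom Vg c al ->
  dual_hom Vg (a + b + c) (Sop eps mul rho' (fun x => - mu' x) a b x y al).
Proof.
move=> Hx Hy Hal; rewrite /Sop /= !opp_lfunE.
apply: dual_homB; first apply: dual_homD.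
- apply: dual_homN; apply: dual_hom_eq (degd Hmu' Hx (degd Hrho' Hy Hal)).
  by rewrite addrA.
- apply: dual_homZ; apply: dual_homN.
  apply: dual_hom_eq (degd Hmu' Hy (degd Hrho' Hx Hal)).
  by rewrite addrCA addrA.
- exact: (degd Hrho' (mulg Hx Hy) Hal).
Qed.


Lemma Topg a b d x y v : x \in Ag a -> y \in Ag b -> v \in Vg d ->
  Top eps mul rho mu a b x y v \in Vg (d + a + b).
Proof.
move=> Hx Hy Hv; rewrite /Top; apply: memvD; first apply: memvB.
- rewrite memvN; apply: memvZ; exact: rhog Hy (mug Hx Hv).
- by rewrite addrAC; exact: rhog Hx (mug Hy Hv).
- by rewrite -addrA; exact: rhog (mulg Hx Hy) Hv.
Qed.

Lemma Popg a b c x y z : x \in Ag a -> y \in Ag b -> z \in Ag c ->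
  Pop eps mul br a b x y z \in Ag (a + b + c).
Proof.
move=> Hx Hy Hz; rewrite /Pop; apply: memvB; first apply: memvB.
- rewrite -addrA; exact: brg Hx (mulg Hy Hz).
- exact: mulg (brg Hx Hy) Hz.
- apply: memvZ; have -> : a + b + c = b + (a + c) by rewrite [RHS]addrCA addrA.
  exact: mulg Hy (brg Hx Hz).
Qed.

Lemma degm a c x al : x \in Ag a -> dual_hom Vg c al -> dual_hom Vg (a + c) ((- mu' x) al).
Proof. by move=> Hx Hal; rewrite opp_lfunE; apply: dual_homN; exact: (degd Hmu' Hx Hal). Qed.

Arguments degm {a c x al}.
Lemma degmN a c x al : x \in Ag a -> dual_hom Vg c al -> dual_hom Vg (a + c) (- (mu' x al)).
Proof. by move=> Hx Hal; have := degm Hx Hal; rewrite opp_lfunE. Qed.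
Arguments degmN {a c x al}.
Arguments dual_R {a b c d x y al v}.
Arguments dual_S {a b c d x y al v}.
Arguments dual_Rg {a b c x y al}.
Arguments dual_Sg {a b c x y al}.
Arguments Topg {a b d x y v}.
Arguments Popg {a b c x y z}.
Hypothesis HA : graded_space Ag.
Hypothesis HR : forall a b c x y z w, x \in Ag a -> y \in Ag b -> z \in Ag c ->
     Rop eps br rho mu (a + b) c (mul x y) z w =
     eps a (b + c) *: Rop eps br rho mu b c y z (mu x w)
     + eps b c *: Rop eps br rho mu a c x z (mu y w).
Hypothesis HP : forall a b c x y z w, x \in Ag a -> y \in Ag b -> z \in Ag c ->
     mu (Pop eps mul br a b x y z) w =
     - (eps a (b + c) *: Top eps mul rho mu b c y z (mu x w))
     + mu x (Top eps mul rho mu b c y z w).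

Lemma main_sec : F_manifold_rep eps Ag mul br (dual_hom Vg) rho' (fun x => - mu' x).
Proof.
split.
- split; first exact: Hrho'.1.
  + move=> c a x al Hx Hal; apply: dual_hom_eq (degd Hrho' Hx Hal); exact: addrC.
  + move=> a b x y w Hx Hy; move: w; apply: (ext_good HV); try goodtac.
    move=> c al Hal; apply: (ext_hom HV) => d v Hv.
    do ?rewrite !lfunE /=.
    rewrite (evd Hrho' (brg Hx Hy) Hal Hv) (evd Hrho' Hx (degd Hrho' Hy Hal) Hv).
    rewrite (evd Hrho' Hy (degd Hrho' Hx Hal) Hv) (evd Hrho' Hy Hal (rhog Hx Hv)).
    rewrite (evd Hrho' Hx Hal (rhog Hy Hv)).
    case: Hrho => _ _ Hrbr; rewrite (Hrbr a b x y v Hx Hy).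
    rewrite ?linearB ?linearD ?linearN ?linearZ /= ?scaleKo !epsDl !epsDr (epsV a b).
    by field; rewrite epsnz.
- have key : forall a b x y, x \in Ag a -> y \in Ag b ->
      forall w, (- mu' (mul x y)) w = (- mu' x) ((- mu' y) w).
    move=> a b x y Hx Hy; apply: (ext_good HV); try goodtac.
    move=> c al Hal; apply: (ext_hom HV) => d v Hv.
    do ?rewrite !lfunE /=.
    rewrite ?linearN ?opp_lfunE ?opprK.
    rewrite (evd Hmu' (mulg Hx Hy) Hal Hv) (evd Hmu' Hx (degd Hmu' Hy Hal) Hv).
    rewrite (evd Hmu' Hy Hal (mug Hx Hv)).
    case: HF => [[_ _ _ Hcomm] _ _]; case: Hmu => Hml _ Hmm.
    rewrite (Hcomm a b x y Hx Hy) (linZ Hml) scale_lfunE Hmm.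
    rewrite ?linearB ?linearD ?linearN ?linearZ /= ?scaleKo !epsDl !epsDr.
    by ring.
  case: HF => [[Hbil _ _ Hcomm] _ _].
  split.
  + by move=> k x y; rewrite (Hmu'.1 k x y) opprD scalerN.
  + move=> c a x al Hx Hal /=; apply: dual_hom_eq (degm Hx Hal); exact: addrC.
  + suff H : forall y x w, (- mu' (mul x y)) w = (- mu' x) ((- mu' y) w).
      by move=> x y w; exact: H.
    apply: (hom_reduce HA).
    * move=> x w; rewrite (bil0r Hbil) (lin0 Hmu'.1) !oppr0 !zero_lfunE linear0.
      done.
    * move=> y1 y2 H1 H2 x w.
      by rewrite (bilDr Hbil) !(linD Hmu'.1) !opprD !add_lfunE H1 H2 linearD.
    * move=> b y Hy; apply: (hom_reduce HA).
      -- by move=> w; rewrite (bil0l Hbil) (lin0 Hmu'.1) !oppr0 !zero_lfunE.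
      -- move=> x1 x2 H1 H2 w.
         by rewrite (bilDl Hbil) !(linD Hmu'.1) !opprD !add_lfunE H1 H2.
      -- move=> a x Hx; exact: (key a b x y Hx Hy).
- move=> a1 a2 a3 x1 x2 x3 w H1 H2 H3; move: w; apply: (ext_good HV);
    [rewrite /Rop /=; goodtac | rewrite /Rop /=; goodtac | ].
  move=> c al Hal; apply: (ext_hom HV) => d v Hv.
  rewrite (dual_R (mulg H1 H2) H3 Hal Hv) (HR _ _ _ _ _ _ _ H1 H2 H3).
  rewrite add_lfunE scale_lfunE !opp_lfunE.
  rewrite (evd Hmu' H1 (dual_Rg H2 H3 Hal) Hv) (evd Hmu' H2 (dual_Rg H1 H3 Hal) Hv).
  rewrite (dual_R H2 H3 Hal (mug H1 Hv)) (dual_R H1 H3 Hal (mug H2 Hv)).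
  rewrite ?linearD ?linearZ /= ?scaleKo !epsDl !epsDr (epsV a1 a2).
  by field; rewrite epsnz.
- move=> a1 a2 a3 x1 x2 x3 w H1 H2 H3; move: w; apply: (ext_good HV);
    [goodtac | rewrite /Sop /=; goodtac | ].
  move=> c al Hal; apply: (ext_hom HV) => d v Hv.
  rewrite !opp_lfunE (evd Hmu' (Popg H1 H2 H3) Hal Hv) (HP _ _ _ _ _ _ _ H1 H2 H3).
  rewrite add_lfunE opp_lfunE scale_lfunE opp_lfunE.
rewrite (dual_S H2 H3 (degmN H1 Hal) Hv).
  rewrite [(- mu' x1 al) _]opp_lfunE.
  rewrite (evd Hmu' H1 Hal (Topg H2 H3 Hv)).
  rewrite (evd Hmu' H1 (dual_Sg H2 H3 Hal) Hv) (dual_S H2 H3 Hal (mug H1 Hv)).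
  move: (Top eps mul rho mu a2 a3 x2 x3 (mu x1 v)) (Top eps mul rho mu a2 a3 x2 x3 v) => T1 T2.
  rewrite linearD /= ?scaleKo !epsDl !epsDr.
  rewrite [al (- _)]linearN linearZ /= scaleKo (epsV a1 a2) (epsV a1 a3).
  by field; rewrite !epsnz.
Qed.

End Main.

Theorem proposition3p6
  (K : closedFieldType) (G : zmodType) (eps : G -> G -> K)
  (charK : [pchar K] =i pred0) (Heps : skew_bichar eps)
  (A : vectType K) (Ag : G -> {vspace A}) (HA : graded_space Ag)
  (mul br : A -> A -> A) (HF : F_manifold_color eps Ag mul br)
  (V : vectType K) (Vg : G -> {vspace V}) (HV : graded_space Vg)
  (rho mu : A -> 'End(V))
  (Hrho : lie_rep eps Ag br (fun a (v : V) => v \in Vg a) rho)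
  (Hmu : assoc_rep Ag mul (fun a (v : V) => v \in Vg a) mu)
  (HR : forall a b c x y z w, x \in Ag a -> y \in Ag b -> z \in Ag c ->
     Rop eps br rho mu (a + b) c (mul x y) z w =
     eps a (b + c) *: Rop eps br rho mu b c y z (mu x w)
     + eps b c *: Rop eps br rho mu a c x z (mu y w))
  (HP : forall a b c x y z w, x \in Ag a -> y \in Ag b -> z \in Ag c ->
     mu (Pop eps mul br a b x y z) w =
     - (eps a (b + c) *: Top eps mul rho mu b c y z (mu x w))
     + mu x (Top eps mul rho mu b c y z w))
  (rho' mu' : A -> 'End(dualsp V))
  (Hrho' : is_dual_map eps Ag Vg rho rho')
  (Hmu' : is_dual_map eps Ag Vg mu mu') :
  F_manifold_rep eps Ag mul br (dual_hom Vg) rho' (fun x => - mu' x).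
Proof.
exact (@main_sec K G eps Heps A Ag mul br HF V Vg HV rho mu Hrho Hmu rho' mu' Hrho' Hmu' HA HR HP).
Qed.
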